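(* For $1\le t\le m$, any deterministic voting rule that takes top-$t$ preference profiles as input and has bounded utilitarian distortion has metric distortion $\Omega(m-t+1)$.
   Context: Setting: $n$ agents, $m$ alternatives; each agent has an underlying strict ranking, but the rule only receives each agent's ordered list of her top $t$ alternatives (a top-$t$ profile $\vec\sigma_t$). A full profile extends $\vec\sigma_t$ if each agent's top-$t$ prefix coincides with that in $\vec\sigma_t$. Metric framework: a pseudometric $d$ on agents and alternatives is consistent with a full profile $\vec\sigma$ if $X\succ_iY\Rightarrow d(i,X)\le d(i,Y)$, and consistent with $\vec\sigma_t$ if it is consistent with some full profile extending $\vec\sigma_t$. $\mathrm{SC}(X,d)=\sum_id(i,X)$. Metric distortion of a (top-$t$) rule $f$: $\sup_{\vec\sigma_t}\sup_{d}\mathbb E_{X\sim f(\vec\sigma_t)}[\mathrm{SC}(X,d)]/\min_X\mathrm{SC}(X,d)$ over consistent $d$. Utilitarian framework: unit-sum nonnegative utilities $u_i$ ($\sum_Xu_i(X)=1$), consistent with a full profile if $X\succ_iY\Rightarrow u_i(X)\ge u_i(Y)$ and with $\vec\sigma_t$ if consistent with some full extension. $\mathrm{SW}(X,\vec u)=\sum_iu_i(X)$. Utilitarian distortion: $\sup_{\vec\sigma_t}\sup_{\vec u}\max_X\mathrm{SW}(X,\vec u)/\mathbb E_{X\sim f(\vec\sigma_t)}[\mathrm{SW}(X,\vec u)]$; it is bounded if finite. *)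

(* Defs.v *)
From HB Require Import structures.
From mathcomp Require Import all_boot all_order all_algebra all_fingroup.
From mathcomp Require Import reals.
Set Implicit Arguments. Unset Strict Implicit. Unset Printing Implicit Defensive.
Import Order.TTheory GRing.Theory Num.Theory.
Local Open Scope ring_scope.

(* Agents are 'I_n, alternatives are 'I_m. *)

(* A full profile: agent i's ranking is a permutation; (s i) k is the
   alternative she ranks in position k (position 0 = top). *)
Definition full_profile (n m : nat) := 'I_n -> {perm 'I_m}.

Definition prefers n m (s : full_profile n m) (i : 'I_n) (X Y : 'I_m) : bool :=
  ((s i)^-1%g X < (s i)^-1%g Y)%N.

(* A top-t profile: agent i's ordered list of her top t alternatives;
   (st i) k is the alternative in position k. *)
Definition topt_profile (n m t : nat) := 'I_n -> 'I_t -> 'I_m.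

Definition extends n m t (s : full_profile n m) (st : topt_profile n m t) : Prop :=
  forall (i : 'I_n) (k : 'I_t) (k' : 'I_m), val k = val k' -> s i k' = st i k.

Definition topt_rule (m t : nat) := forall n : nat, topt_profile n m t -> 'I_m.

Definition point (n m : nat) := ('I_n + 'I_m)%type.

Definition is_pseudometric (R : realType) (T : Type) (d : T -> T -> R) : Prop :=
  (forall x, d x x = 0) /\
  (forall x y, 0 <= d x y) /\
  (forall x y, d x y = d y x) /\
  (forall x y z, d x z <= d x y + d y z).

Definition dist (R : realType) n m (d : point n m -> point n m -> R) (i : 'I_n) (X : 'I_m) : R :=
  d (inl i) (inr X).

Definition metric_consistent (R : realType) n m (d : point n m -> point n m -> R)
    (s : full_profile n m) : Prop :=
  is_pseudometric d /\
  forall i X Y, prefers s i X Y -> dist d i X <= dist d i Y.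

Definition metric_consistent_t (R : realType) n m t (d : point n m -> point n m -> R)
    (st : topt_profile n m t) : Prop :=
  exists s : full_profile n m, extends s st /\ metric_consistent d s.

Definition SC (R : realType) n m (X : 'I_m) (d : point n m -> point n m -> R) : R :=
  \sum_(i < n) dist d i X.

(* The metric distortion of f is at most D (sup of the ratio <= D,
   with ratio = +oo when the optimum is 0 but f's cost is positive). *)
Definition metric_distortion_le (R : realType) m t (f : topt_rule m t) (D : R) : Prop :=
  forall (n : nat) (st : topt_profile n m t) (d : point n m -> point n m -> R),
    metric_consistent_t d st ->
    forall X : 'I_m, SC (f n st) d <= D * SC X d.

Definition util_consistent (R : realType) n m (u : 'I_n -> 'I_m -> R) (s : full_profile n m) : Prop :=
  (forall i X, 0 <= u i X) /\
  (forall i, \sum_(X < m) u i X = 1) /\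
  (forall i X Y, prefers s i X Y -> u i Y <= u i X).

Definition util_consistent_t (R : realType) n m t (u : 'I_n -> 'I_m -> R)
    (st : topt_profile n m t) : Prop :=
  exists s : full_profile n m, extends s st /\ util_consistent u s.

Definition SW (R : realType) n m (X : 'I_m) (u : 'I_n -> 'I_m -> R) : R := \sum_(i < n) u i X.

Definition util_distortion_le (R : realType) m t (f : topt_rule m t) (B : R) : Prop :=
  forall (n : nat) (st : topt_profile n m t) (u : 'I_n -> 'I_m -> R),
    util_consistent_t u st ->
    forall X : 'I_m, SW X u <= B * SW (f n st) u.

Definition util_bounded (R : realType) m t (f : topt_rule m t) : Prop :=
  exists B : R, util_distortion_le f B.

(* Main.v *)
Require Import Defs.
From HB Require Import structures.
From mathcomp Require Import all_boot all_order all_algebra all_fingroup.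
From mathcomp Require Import reals.
From mathcomp Require Import zify lra.
Import Order.TTheory GRing.Theory Num.Theory.
Local Open Scope ring_scope.

Definition aval (t j : nat) : nat := if j == 0%N then 0%N else (j + (t - 1))%N.

Definition atop (m t : nat) (j : 'I_((m.+1 - t).+1)) : 'I_m.+1 := inord (aval t j).

Lemma atop_val m t j : (1 <= t)%N -> val (atop m t j) = aval t j.
Proof.
move=> Ht; rewrite /atop /= inordK // /aval.
have := ltn_ord j; case: eqP => [-> //|Hj]; move: (nat_of_ord j) Hj => J; lia.
Qed.

Lemma atop_inj m t : (1 <= t)%N -> injective (atop m t).
Proof.
move=> Ht j1 j2 /(congr1 val); rewrite !atop_val // /aval => H.
apply: val_inj => /=; move: H; move: (nat_of_ord j1) (nat_of_ord j2) => J1 J2; do 2 case: eqP; lia.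
Qed.

Lemma atop_shape m t j : (1 <= t)%N ->
  (val (atop m t j) = 0%N <-> val j = 0%N) /\ (val (atop m t j) = 0%N \/ (t <= val (atop m t j))%N).
Proof.
move=> Ht; rewrite atop_val // /aval /=; move: (nat_of_ord j) => J; case: eqP => HJ.
  split; [split => _; lia | left; lia].
split; [split => H; lia | right; lia].
Qed.

Definition s0 m t (j : 'I_((m.+1 - t).+1)) : {perm 'I_m.+1} := tperm ord0 (atop m t j).
Arguments s0 {m t}.
Arguments atop {m t}.

Definition st0 m t (Ht : (t <= m.+1)%N) : topt_profile ((m.+1 - t).+1) m.+1 t :=
  fun j p => s0 j (widen_ord Ht p).
Arguments st0 {m t}.

Lemma ext0 m t (Ht : (t <= m.+1)%N) : extends (fun j => @s0 m t j) (st0 Ht).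
Proof.
move=> i k k' Hk; rewrite /st0; congr (s0 i _); exact: val_inj.
Qed.

Lemma sum_ind (R : realType) (T : finType) (a : T) :
  \sum_(z : T) ((z == a)%:R : R) = 1.
Proof.
rewrite (bigD1 a) //= eqxx big1 ?addr0 // => z /negbTE -> //.
Qed.


Lemma rank_far m t (j j0 : 'I_((m.+1 - t).+1)) : (1 <= t)%N -> j <> j0 ->
  (t <= val ((s0 j)^-1%g (atop j0)))%N.
Proof.
move=> Ht Hne; set r := ((s0 j)^-1%g (atop j0)).
have Hr : s0 j r = atop j0 by rewrite /r permKV.
rewrite leqNgt; apply/negP => Hlt; move: Hr; rewrite /s0.
case: tpermP => [Hr0 Hy | Hra Hy | Hn0 Hna Hy].
- by apply: Hne; exact: (@atop_inj m t Ht).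
- have [A1 _] := @atop_shape m t j0 Ht.
  have [A2 [B2|B2]] := @atop_shape m t j Ht.
  + have Hj0 : val j0 = 0%N by apply/(proj1 A1); rewrite -Hy.
    have Hj : val j = 0%N by apply/(proj1 A2).
    by apply: Hne; apply: val_inj; rewrite Hj Hj0.
  + move: Hlt B2; rewrite Hra /=; lia.
- have [_ [B|B]] := @atop_shape m t j0 Ht.
  + apply: Hn0; apply: val_inj; by rewrite Hy B.
  + move: Hlt B; rewrite -Hy /=; lia.
Qed.

Lemma abs1 (R : realType) (b : bool) : `|1 - (if b then 2 else 0)| = 1 :> R.
Proof.
case: b; last by rewrite subr0 normr1.
have -> : (1 - 2 : R) = - 1 by lra.
by rewrite normrN normr1.
Qed.

Lemma abs2 (R : realType) (b : bool) : `|(if b then 1 else 0) - 2| = 2 - (b%:R) :> R.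
Proof.
case: b => /=.
  have -> : (1 - 2 : R) = - 1 by lra.
  by rewrite normrN normr1; lra.
have -> : (0 - 2 : R) = - 2 by lra.
by rewrite normrN ger0_norm ?subr0 //; lra.
Qed.

Theorem mainTheorem8 (R : realType) :
  exists c : R, 0 < c /\
    forall (m t : nat), (1 <= t <= m)%N ->
    forall f : topt_rule m t, util_bounded R f ->
    forall D : R, D < c * (m - t + 1)%:R -> ~ metric_distortion_le f D.
Proof.
exists 2^-1; split; first by rewrite invr_gt0 ltr0n.
move=> m t /andP[Ht1 Htm]; case: m Htm => [|m] Htm; first by move: Ht1 Htm; lia.
move=> f [B HB] D HD Hmd.
rewrite addn1 in HD.
set n := (m.+1 - t).+1 in HD Hmd HB.
set st := st0 Htm.
set y := f n st.
have Hn1 : (1 : R) <= n%:R by rewrite ler1n.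
case: (boolP [exists j : 'I_n, @atop m t j == y]) => [/existsP [j0 /eqP Hj0] | Hno].
-
  pose h := fun p : point n m.+1 => match p with
    | inl j => if j == j0 then 1 else 0
    | inr z => if z == y then 2 else (0 : R) end.
  pose d := fun p q => `|h p - h q|.
  pose s' := fun j : 'I_n => if j == j0 then s0 j
    else (tperm ((s0 j)^-1%g y) ord_max * s0 j)%g.
  have Hd : metric_consistent_t d st.
    exists s'; split.
      move=> i k k' Hk; rewrite /s'; case: eqP => [_|Hij]; first exact: (@ext0 m t Htm i k k' Hk).
      have Hfar := @rank_far m t i j0 Ht1 Hij.
      rewrite permM.
      have -> : tperm ((s0 i)^-1%g y) ord_max k' = k'.
        apply: tpermD.
          apply/eqP; rewrite -Hj0 => /(congr1 val) /=; move: Hfar (ltn_ord k) Hk => /=; lia.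
        apply/eqP => /(congr1 val) /=; move: (ltn_ord k) Hk Hfar => /=.
        have := ltn_ord ((s0 i)^-1%g (atop j0)); lia.
      exact: (@ext0 m t Htm i k k' Hk).
    split.
      split; first by move=> x; rewrite /d subrr normr0.
      split; first by move=> *; exact: normr_ge0.
      split; first by move=> *; exact: distrC.
      by move=> x y' z; exact: ler_distD.
    move=> i X Y; rewrite /prefers /dist /d /h.
    case: eqP => [Hi|Hi]; first by rewrite !abs1.
    case: (X =P y) => [HX|HX]; last first.
      by rewrite subrr normr0 normr_ge0.
    have Hmax : s' i ord_max = y.
      by rewrite /s'; move/eqP/negbTE: Hi => ->; rewrite permM tpermR permKV.
    by rewrite HX -{1}Hmax permK ltnNge leq_ord.
  have HSCy : SC y d = 2 * n%:R - 1.
    rewrite /SC /dist /d /= eqxx.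
    rewrite (eq_bigr (fun i => 2 - (i == j0)%:R)); last by move=> i _; exact: abs2.
    by rewrite sumrB sumr_const card_ord sum_ind mulr_natr.
  case: (boolP [exists X, X != y]) => [/existsP [X HX] | Hall].
  + have HSCX : SC X d = 1.
      rewrite /SC /dist /d /= (negbTE HX).
      rewrite (eq_bigr (fun i => (i == j0)%:R)); first exact: sum_ind.
      by move=> i _; case: eqP => _; rewrite subr0 ?normr1 ?normr0.
    have := Hmd n st d Hd X; rewrite HSCy HSCX; lra.
  + have Ham : ord0 = y /\ ord_max = y.
      by split; apply/eqP; apply/negPn; move: Hall; rewrite negb_exists => /forallP ->.
    have Hm0 : m = 0%N.
      by case: Ham => H1 H2; move: (congr1 val (etrans H1 (esym H2))) => /=.
    have Hn : n = 1%N by rewrite /n Hm0; have := Htm; have := Ht1; rewrite Hm0; lia.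
    have := Hmd n st d Hd y; rewrite HSCy; rewrite Hn in HD *; lra.
-
  pose u := fun (j : 'I_n) (z : 'I_m.+1) => ((z == atop j)%:R : R).
  have Hu : util_consistent_t u st.
    exists (fun j => s0 j); split; first exact: (@ext0 m t Htm).
    split; first by move=> i X; exact: ler0n.
    split; first by move=> i; exact: sum_ind.
    move=> i X Y; rewrite /prefers /u; case: eqP => [-> | _]; last by move=> _; exact: ler0n.
    by rewrite /s0 tpermV tpermR ltn0.
  have := HB n st u Hu (@atop m t ord0); rewrite /SW.
  have -> : \sum_(i < n) u i y = 0.
    apply: big1 => i _; rewrite /u; case: eqP => // Hy; exfalso.
    by move: Hno; rewrite negb_exists => /forallP /(_ i); rewrite -Hy eqxx.
  rewrite mulr0 (bigD1 ord0) //= /u eqxx /=.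


  set S := (\sum_(i < _ | _) _)%R.
  have : 0 <= S by apply: sumr_ge0 => i _; exact: ler0n.
  move=> HS H; lra.
Qed.
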